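(* Let $\Bbbk$ be a field of characteristic zero, let $n \geq 3$, $d \geq 2$, and $S=\Bbbk[x_1,\ldots,x_n]$. Let $$\beta(n,d) =\binom{n+d-1}{d}-\begin{cases} 3(d-1) & \text{if } n=3 \text{ and } d\geq 3 \text{ is odd,} \\ 3(d-1)+1 & \text{if } n=3 \text{ and } d\geq 2 \text{ is even,} \\ 2d & \text{if } n\geq 4. \end{cases}$$ Then for every integer $\mu\in \left[\mathrm{HF}(S,d)-\mathrm{HF}(S,d-1), \beta(n,d) \right]$ there exists an artinian monomial ideal $I$ minimally generated by $\mu$ elements of degree $d$ such that $S/I$ fails the WLP by surjectivity in degree $d-1$. Moreover, this interval is non-empty except for the case $n=3$, $d= 2$.
   Context: $\mathrm{HF}(A,k)=\dim_\Bbbk A_k$. For a monomial ideal $I$, $A=S/I$ fails the WLP in degree $i$ if $\times(x_1+\cdots+x_n): A_i\to A_{i+1}$ does not have maximal rank; it fails the WLP by surjectivity in degree $i$ if in addition $\mathrm{HF}(A,i)\ge \mathrm{HF}(A,i+1)$. *)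

(* Defs.v *)
From HB Require Import structures.
From mathcomp Require Import all_boot all_order all_algebra.
From mathcomp Require Import mpoly.
Set Implicit Arguments. Unset Strict Implicit. Unset Printing Implicit Defensive.
Import Order.TTheory GRing.Theory.
Local Open Scope ring_scope.

Section WLPDefs.
Variables (K : fieldType) (n : nat).

(* Coefficient row vector of p on the (finite) set of monomials of degree < b.
   For polynomials of degree < b this is an injective linear map. *)
Definition coefrow (b : nat) (p : {mpoly K[n]}) : 'rV[K]_#|{: 'X_{1..n < b}}| :=
  \row_(j < #|{: 'X_{1..n < b}}|) p@_(val (enum_val j)).

Definition dimspan (b : nat) (s : seq {mpoly K[n]}) : nat :=
  \rank (\matrix_(i < size s) coefrow b (s`_i)).

Definition Sbasis (k : nat) : seq {mpoly K[n]} :=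
  [seq 'X_[val m] | m <- enum {: 'X_{1..n < k.+1}} & mdeg (val m) == k].

Definition HF_S (k : nat) : nat := dimspan k.+1 (Sbasis k).

(* Spanning list of I_k, the degree-k component of the ideal I of S generated
   by the monomials x^g, g in G :  I_k = sum_g S_{k - deg g} * x^g. *)
Definition Ipart (G : seq 'X_{1..n}) (k : nat) : seq {mpoly K[n]} :=
  flatten [seq [seq 'X_[val m] * 'X_[g]
                 | m <- enum {: 'X_{1..n < k.+1}} & (mdeg (val m) + mdeg g == k)%N]
           | g <- G].

Definition HF_A (G : seq 'X_{1..n}) (k : nat) : nat :=
  (HF_S k - dimspan k.+1 (Ipart G k))%N.

Definition ell : {mpoly K[n]} := \sum_(i < n) 'X_i.

(* rank of  x l : A_k -> A_{k+1}, A = S/I.  Its image is (l S_k + I_{k+1}) / I_{k+1}. *)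
Definition rank_ell (G : seq 'X_{1..n}) (k : nat) : nat :=
  subn (dimspan k.+2 ([seq ell * p | p <- Sbasis k] ++ Ipart G k.+1))
       (dimspan k.+2 (Ipart G k.+1)).

Definition fails_WLP_in (G : seq 'X_{1..n}) (k : nat) : Prop :=
  rank_ell G k <> minn (HF_A G k) (HF_A G k.+1).

Definition fails_WLP_surj_in (G : seq 'X_{1..n}) (k : nat) : Prop :=
  fails_WLP_in G k /\ (HF_A G k.+1 <= HF_A G k)%N.

Definition artinian (G : seq 'X_{1..n}) : Prop :=
  exists D : nat, forall k : nat, (D <= k)%N -> HF_A G k = 0%N.

(* G is the minimal monomial generating set of I, of mu elements of degree d:
   distinct monomials of one degree, none divisible by another *)
Definition min_gens_deg (G : seq 'X_{1..n}) (mu d : nat) : Prop :=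
  [/\ uniq G, size G = mu & all (fun g => mdeg g == d) G].

End WLPDefs.

Definition beta (n d : nat) : nat :=
  ('C(n + d - 1, d) -
   (if n == 3 then (if odd d then 3 * (d - 1) else 3 * (d - 1) + 1) else 2 * d))%N.

(* Main.v *)
Require Import Defs.
From HB Require Import structures.
From mathcomp Require Import all_boot all_order all_algebra.
From mathcomp Require Import mpoly.
From mathcomp Require Import ring zify.
Set Implicit Arguments. Unset Strict Implicit. Unset Printing Implicit Defensive.
Import Order.TTheory GRing.Theory.


Section LA.
Variables (K : fieldType) (n : nat).
Local Open Scope ring_scope.

Lemma sum_enum_col b (m : 'X_{1..n}) (f : 'X_{1..n} -> K) : (mdeg m < b)%N ->
  \sum_(j < #|{: 'X_{1..n < b}}|) ((m == val (enum_val j))%:R * f (val (enum_val j)))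
  = f m.
Proof.
move=> hm.
rewrite -(big_enum_val (A := {: 'X_{1..n < b}}) (fun x : 'X_{1..n < b} => (m == val x)%:R * f (val x))).
rewrite (bigD1 (BMultinom hm)) //= eqxx mul1r big1 ?addr0 // => x hx.
case: eqP => [e|]; last by rewrite mul0r.
by exfalso; move: hx; rewrite -(inj_eq val_inj) /= e eqxx ?andbF.
Qed.

Definition smat b (s : seq {mpoly K[n]}) := \matrix_(i < size s) coefrow b (s`_i).

Lemma dimspanE b (s : seq {mpoly K[n]}) : dimspan b s = \rank (smat b s).
Proof. by []. Qed.

Lemma row_in b s p : p \in s -> (coefrow b p <= smat b s)%MS.
Proof.
move=> hp; have hi : (index p s < size s)%N by rewrite index_mem.
have := @row_sub K _ _ (Ordinal hi) (smat b s).
by rewrite rowK /= nth_index.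
Qed.

Lemma dimspan_mono b (s t : seq {mpoly K[n]}) : {subset s <= t} -> (dimspan b s <= dimspan b t)%N.
Proof.
move=> st; apply: mxrankS; apply/row_subP => i; rewrite rowK.
by apply: row_in; apply: st; apply: mem_nth.
Qed.

Lemma dimspan_le_size b (s : seq {mpoly K[n]}) : (dimspan b s <= size s)%N.
Proof. exact: rank_leq_row. Qed.

Lemma coefrowD b (p q : {mpoly K[n]}) : coefrow b (p + q) = coefrow b p + coefrow b q.
Proof. by apply/rowP => j; rewrite !mxE mcoeffD. Qed.

Lemma coefrow0 b : coefrow b (0 : {mpoly K[n]}) = 0.
Proof. by apply/rowP => j; rewrite !mxE mcoeff0. Qed.

Lemma coefrowX b (m : 'X_{1..n}) j :
  coefrow b ('X_[m] : {mpoly K[n]}) 0 j = (m == val (enum_val j))%:R.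
Proof. by rewrite mxE mcoeffX. Qed.

Lemma dimspan_X b (s : seq 'X_{1..n}) : uniq s -> all (fun m => mdeg m < b)%N s ->
  dimspan b [seq ('X_[m] : {mpoly K[n]}) | m <- s] = size s.
Proof.
move=> us hs; apply/eqP; rewrite eqn_leq.
rewrite (leq_trans (dimspan_le_size _ _)) ?size_map //=.
rewrite dimspanE; set A := smat b _.
have AA : A *m A^T = 1%:M.
  apply/matrixP => i k; rewrite !mxE.
  have hi : (i < size s)%N by rewrite -(size_map (fun m => 'X_[m] : {mpoly K[n]})).
  have hk : (k < size s)%N by rewrite -(size_map (fun m => 'X_[m] : {mpoly K[n]})).
  under eq_bigr => j _ do rewrite !mxE !(nth_map 0%MM) // !mcoeffX.
  rewrite (sum_enum_col (fun x => (nth 0%MM s k == x)%:R)); last first.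
    by move/allP: hs; apply; apply: mem_nth.
  by rewrite nth_uniq // eq_sym.
have := mxrankM_maxl A A^T; rewrite AA mxrank1.
by rewrite -{1}(size_map (fun m : 'X_{1..n} => ('X_[m] : {mpoly K[n]})) s).
Qed.


Definition sig k : seq 'X_{1..n} :=
  [seq val m | m <- enum {: 'X_{1..n < k.+1}} & mdeg (val m) == k].

Lemma Sbasis_sig k : Sbasis K n k = [seq ('X_[m] : {mpoly K[n]}) | m <- sig k].
Proof. by rewrite /Sbasis /sig -map_comp. Qed.

Lemma sig_uniq k : uniq (sig k).
Proof. by rewrite (map_inj_uniq val_inj) filter_uniq // enum_uniq. Qed.

Lemma mem_sig k t : (t \in sig k) = (mdeg t == k).
Proof.
apply/mapP/idP => [[x]|/eqP ht].
  by rewrite mem_filter => /andP [h _] ->.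
have ht' : (mdeg t < k.+1)%N by rewrite ht.
by exists (BMultinom ht'); rewrite // mem_filter mem_enum /= ht eqxx.
Qed.

Lemma sig_deg k : all (fun m => mdeg m < k.+1)%N (sig k).
Proof. by apply/allP => t; rewrite mem_sig => /eqP ->. Qed.

Lemma HF_S_size k : HF_S K n k = size (sig k).
Proof. by rewrite /HF_S Sbasis_sig dimspan_X ?sig_uniq ?sig_deg. Qed.

Lemma dimspan_lt d (s : seq {mpoly K[n]}) (c : 'X_{1..n} -> K) :
  (forall p, p \in s -> exists r : seq 'X_{1..n},
     [/\ p = \sum_(t <- r) 'X_[t], all (fun t => mdeg t == d) r
       & \sum_(t <- r) c t = 0]) ->
  (exists m0, mdeg m0 = d /\ c m0 != 0) ->
  (dimspan d.+1 s < HF_S K n d)%N.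
Proof.
move=> hs [m0 [dm0 cm0]].
rewrite /HF_S !dimspanE.
set B := smat d.+1 s; set S := smat d.+1 (Sbasis K n d).
pose w : 'cV[K]_#|{: 'X_{1..n < d.+1}}| := \col_j c (val (enum_val j)).
have BS : (B <= S)%MS.
  apply/row_subP => i; rewrite rowK.
  have [r [-> hr _]] := hs _ (mem_nth 0 (ltn_ord i)).
  elim: r hr => [|t r IH]; first by rewrite big_nil coefrow0 sub0mx.
  rewrite big_cons coefrowD /= => /andP [ht hr]; rewrite addmx_sub ?IH //.
  by apply: row_in; rewrite Sbasis_sig; apply: map_f; rewrite mem_sig.
have Bw : B *m w = 0.
  apply/matrixP => i j; rewrite !mxE.
  have [r [hp hr hc]] := hs _ (mem_nth 0 (ltn_ord i)).
  rewrite /B /w /smat.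
  under eq_bigr => k _ do rewrite !mxE hp raddf_sum mulr_suml.
  rewrite exchange_big /= -[RHS]hc big_seq [RHS]big_seq; apply: eq_bigr => t ht.
  under eq_bigr => k _ do rewrite /= mcoeffX.
  apply: sum_enum_col.
  by move/allP: hr => /(_ t ht) /eqP ->.
have Sw : S *m w != 0.
  have m0s : m0 \in sig d by rewrite mem_sig dm0.
  have hl : (index m0 (sig d) < size (Sbasis K n d))%N.
    by rewrite Sbasis_sig size_map index_mem.
  have e : (Sbasis K n d)`_(index m0 (sig d)) = 'X_[m0].
    by rewrite Sbasis_sig (nth_map 0%MM) ?index_mem // nth_index.
  apply/eqP => /matrixP /(_ (Ordinal hl) 0); rewrite !mxE.
  under eq_bigr => k _ do rewrite !mxE /= e.
  under eq_bigr => k _ do rewrite mcoeffX.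
  rewrite sum_enum_col ?dm0 // => h.
  by move: cm0; rewrite h eqxx.
have := mxrank_mul_ker S w.
have : (B <= S :&: kermx w)%MS by rewrite sub_capmx BS; apply/sub_kermxP.
move/mxrankS.
have : (\rank (S *m w) != 0)%N by rewrite mxrank_eq0.
lia.
Qed.

End LA.


Lemma size_sig n' k : size (sig n'.+1 k) = 'C(k + n', k).
Proof.
rewrite -(size_basis n' k); apply: perm_size.
apply: uniq_perm; first exact: sig_uniq.
  exact: uniq_basis.
by move=> t; rewrite mem_sig basis_cover.
Qed.

Lemma card_le_seq n b (A : {set 'X_{1..n < b}}) (cl : seq 'X_{1..n}) :
  (forall x, x \in A -> val x \in cl) -> (#|A| <= size cl)%N.
Proof.
move=> h; rewrite cardE -(size_map val); apply: uniq_leq_size.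
  by rewrite (map_inj_uniq val_inj) enum_uniq.
by move=> y /mapP [x hx ->]; apply: h; rewrite -mem_enum.
Qed.

Lemma extend_set (T : finType) (A C : {set T}) k :
  A \subset C -> (#|A| <= k <= #|C|)%N ->
  exists B : {set T}, [/\ A \subset B, B \subset C & #|B| = k].
Proof.
move=> AC /andP [h1 h2].
have [m km] : exists m, k = #|A| + m by exists (k - #|A|); lia.
subst k.
move: h2; elim: m A AC {h1} => [|m IH] A AC h2.
  by exists A; rewrite addn0.
have : A \proper C by rewrite properEcard AC /=; lia.
case/properP => _ [x xC xA].
have h3 : #|x |: A| = (#|A|).+1 by rewrite cardsU1 xA.
have s1 : x |: A \subset C by rewrite subUset sub1set xC AC.
have s2 : (#|x |: A| + m <= #|C|)%N by rewrite h3; lia.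
have [B [B1 B2 B3]] := IH _ s1 s2.
exists B; split => //; last by rewrite B3 h3; lia.
by apply: subset_trans B1; apply: subsetUr.
Qed.

Definition Dset n d := [set x : 'X_{1..n < d.+1} | mdeg (val x) == d].

Lemma card_Dset n d : #|Dset n d| = size (sig n d).
Proof.
rewrite cardE -(size_map val); apply: perm_size.
apply: uniq_perm; first by rewrite (map_inj_uniq val_inj) enum_uniq.
  exact: sig_uniq.
move=> t; rewrite mem_sig; apply/idP/idP => [/mapP [x]|/eqP ht].
  by rewrite mem_enum inE => hx ->.
have ht' : (mdeg t < d.+1)%N by rewrite ht.
by apply/mapP; exists (BMultinom ht'); rewrite // mem_enum inE /= ht.
Qed.


Lemma flatten_nil (A B : eqType) (s : seq A) (f : A -> seq B) :
  (forall x, x \in s -> f x = [::]) -> flatten (map f s) = [::].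
Proof.
elim: s => [//|x s IH] h /=; rewrite h ?mem_head // IH // => y hy.
by apply: h; rewrite inE hy orbT.
Qed.

Lemma ell_mulX (K : fieldType) n (t : 'X_{1..n}) :
  (ell K n * 'X_[t] = \sum_(u <- [seq (t + U_(i))%MM | i <- enum 'I_n]) 'X_[u])%R.
Proof.
rewrite big_map big_enum /= /ell mulr_suml; apply: eq_bigr => i _.
by rewrite mpolyXD mulrC.
Qed.

Lemma sum_mapU (K : fieldType) n (t : 'X_{1..n}) (c : 'X_{1..n} -> K) :
  (\sum_(u <- [seq (t + U_(i))%MM | i <- enum 'I_n]) c u = \sum_(i < n) c (t + U_(i))%MM)%R.
Proof. by rewrite big_map big_enum. Qed.

Lemma construct (K : fieldType) (n e nu : nat) (c : 'X_{1..n} -> K) :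
  (0 < n)%N ->
  (forall m : 'X_{1..n}, \sum_(i < n) c (m + U_(i))%MM = 0)%R ->
  (forall i : 'I_n, c (U_(i) *+ e.+2)%MM = 0)%R ->
  (exists m0, mdeg m0 = e.+2 /\ c m0 != 0%R) ->
  (#|[set x : 'X_{1..n < e.+3} | (mdeg (val x) == e.+2) && (c (val x) != 0%R)]| <= nu)%N ->
  (nu <= HF_S K n e.+1)%N -> (nu + n <= HF_S K n e.+2)%N ->
  exists G : seq 'X_{1..n},
    [/\ min_gens_deg G (HF_S K n e.+2 - nu) e.+2, artinian K G
      & fails_WLP_surj_in K G e.+1].
Proof.
move=> hn h1 h2 h3 h4 h5 h6.
set Z := [set x | _] in h4.
pose pp (i : 'I_n) : 'X_{1..n} := (U_(i) *+ e.+2)%MM.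
have dpp i : mdeg (pp i) = e.+2 by rewrite /pp mdegMn mdeg1 mul1n.
pose P := [set x : 'X_{1..n < e.+3} | val x \in [seq pp i | i <- enum 'I_n]].
have cP : (#|P| <= n)%N.
  have := @card_le_seq n e.+3 P [seq pp i | i <- enum 'I_n].
  by rewrite size_map size_enum_ord; apply => x; rewrite inE.
pose D := Dset n e.+2.
have cD : #|D| = HF_S K n e.+2 by rewrite card_Dset HF_S_size.
have ZDP : Z \subset D :\: P.
  apply/subsetP => x; rewrite !inE => /andP [dx cx]; rewrite dx andbT.
  apply/negP => /mapP [i _ hi]; move: cx; rewrite hi /pp h2 eqxx //.
have cDP : (nu <= #|D :\: P|)%N.
  rewrite cardsD; have := subset_leq_card (subsetIr D P); lia.
have [M [ZM MDP cM]] := extend_set ZDP (introT andP (conj h4 cDP)).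
have MD : M \subset D by apply: subset_trans MDP (subsetDl _ _).
pose G := [seq val x | x <- enum (D :\: M)].
have GD g : g \in G -> mdeg g = e.+2 /\ c g = 0%R.
  case/mapP => x; rewrite mem_enum !inE => /andP [xM xD] ->.
  split; first by apply/eqP.
  apply/eqP; apply/negPn/negP => cx.
  have : x \in Z by rewrite !inE xD.
  by move/(subsetP ZM); rewrite (negbTE xM).
have Gpp i : pp i \in G.
  have hd : (mdeg (pp i) < e.+3)%N by rewrite dpp.
  apply/mapP; exists (BMultinom hd) => //.
  rewrite mem_enum !inE /= dpp eqxx andbT.
  apply/negP => /(subsetP MDP); rewrite !inE /= dpp eqxx andbT.
  by rewrite map_f ?mem_enum.
have uG : uniq G by rewrite (map_inj_uniq val_inj) enum_uniq.
have sG : size G = (HF_S K n e.+2 - nu)%N.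
  by rewrite size_map -cardE cardsD (setIidPr MD) cD cM.
have degG : all (fun g => mdeg g < e.+3)%N G.
  by apply/allP => g /GD [-> _].
exists G; split.
- split => //; apply/allP => g /GD [-> _]; exact: eqxx.
- exists (n * e.+2)%N => k hk; apply/eqP; rewrite /HF_A subn_eq0.
  rewrite /HF_S; apply: dimspan_mono => y; rewrite Sbasis_sig => /mapP [t].
  rewrite mem_sig => /eqP dt ->.
  have [i hi] : exists i, (e.+2 <= t i)%N.
    case: (boolP [exists i, e.+2 <= t i]) => [/existsP //|/existsPn hall].
    exfalso; have : (mdeg t <= n * e.+1)%N.
      rewrite mdegE; apply: (@leq_trans (\sum_(i < n) e.+1)).
        by apply: leq_sum => i _; have := hall i; rewrite -ltnNge.
      by rewrite sum_nat_const card_ord.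
    lia.
  have le_pt : (pp i <= t)%MM.
    apply/mnm_lepP => j; rewrite /pp mulmnE mnm1E.
    by case: eqP => [<-|]; rewrite ?mul1n ?mul0n.
  have ht : (mdeg (t - pp i)%MM < k.+1)%N by have := mdegB t (pp i); lia.
  apply/flatten_mapP; exists (pp i); first exact: Gpp.
  apply/mapP; exists (BMultinom ht); last by rewrite /= -mpolyXD submK.
  rewrite mem_filter mem_enum andbT /= -mdegD submK //.
  by rewrite dt.
- have I0 : Ipart K G e.+1 = [::].
    rewrite /Ipart; apply: flatten_nil => g /GD [dg _].
    rewrite (@eq_filter _ _ pred0) ?filter_pred0 // => m /=.
    by rewrite dg; apply/negbTE; lia.
  have HA1 : HF_A K G e.+1 = HF_S K n e.+1.
    rewrite /HF_A I0; have := @dimspan_le_size K n e.+2 [::]; rewrite leqn0 => /eqP ->; exact: subn0.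
  have rG : (size G <= dimspan e.+3 (Ipart K G e.+2))%N.
    rewrite -(@dimspan_X K n _ _ uG degG); apply: dimspan_mono => y /mapP [g hg ->].
    have [dg _] := GD g hg.
    have h0 : (mdeg (0%MM : 'X_{1..n}) < e.+3)%N by rewrite mdeg0.
    apply/flatten_mapP; exists g => //; apply/mapP; exists (BMultinom h0).
      by rewrite mem_filter mem_enum andbT /= mdeg0 dg.
    by rewrite /= mpolyX0 mul1r.
  have HA2 : (HF_A K G e.+2 <= HF_A K G e.+1)%N.
    rewrite HA1 /HF_A; lia.
  split => //; rewrite /fails_WLP_in (minn_idPr HA2) /rank_ell /HF_A.
  set r := dimspan e.+3 (Ipart K G e.+2).
  set r' := dimspan _ (_ ++ _).
  have rr : (r <= r')%N by apply: dimspan_mono => y hy; rewrite mem_cat hy orbT.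
  have rlt : (r' < HF_S K n e.+2)%N.
    apply: (dimspan_lt (c := c)) => //.
    move=> p; rewrite mem_cat => /orP [/mapP [q]|].
      rewrite Sbasis_sig => /mapP [t]; rewrite mem_sig => /eqP dt -> ->.
      exists [seq (t + U_(i))%MM | i <- enum 'I_n]; split.
      + exact: ell_mulX.
      + by apply/allP => u /mapP [i _ ->]; rewrite mdegD mdeg1 dt addn1.
      + by rewrite sum_mapU.
    case/flatten_mapP => g hg /mapP [m]; have [dg cg] := GD g hg.
    rewrite mem_filter mem_enum andbT dg => hm ->.
    have m0 : val m = 0%MM by apply/eqP; rewrite -mdeg_eq0 -(eqn_add2r e.+2) add0n.
    exists [:: g]; split.
    + by rewrite big_seq1 m0 mpolyX0 mul1r.
    + by rewrite /= dg eqxx.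
    + by rewrite big_seq1.
  lia.
Qed.


Ltac clia := (repeat match goal with
  | H : is_true (_ != _) |- _ => clear H
  | H : (_ == _) = false |- _ => clear H
  | H : is_true (uniq _) |- _ => clear H end); lia.

Section Rest.
Variable n : nat.
Definition restL (L : seq 'I_n) (m : 'X_{1..n}) :=
  [forall j, (j \notin L) ==> (m j == 0%N)].

Lemma restU L m i : restL L (m + U_(i))%MM = restL L m && (i \in L).
Proof.
apply/forallP/andP => [h|[/forallP h iL] j].
  split; last first.
    apply/negPn/negP => iL; have := h i; rewrite iL mnmDE mnm1E eqxx /=; lia.
  apply/forallP => j; apply/implyP => jL; have := h j; rewrite jL mnmDE /=.
  by rewrite addn_eq0 => /andP [].
apply/implyP => jL; have := h j; rewrite jL mnmDE mnm1E /= => /eqP ->.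
have -> : (i == j) = false by apply/negP => /eqP ij; move: jL; rewrite -ij iL.
by [].
Qed.

Lemma restL_mdeg L m : uniq L -> restL L m -> mdeg m = \sum_(j <- L) m j.
Proof.
move=> uL /forallP h; rewrite mdegE (bigID (fun j => j \in L)) /= [X in (_ + X)%N]big1 ?addn0.
  by rewrite big_uniq.
by move=> j jL; apply/eqP; have := h j; rewrite jL.
Qed.

Lemma sum_in_L (K : fieldType) (L : seq 'I_n) (F : 'I_n -> K) : uniq L ->
  (forall i, i \notin L -> F i = 0%R) -> (\sum_i F i = \sum_(i <- L) F i)%R.
Proof.
move=> uL h; rewrite (bigID (fun j => j \in L)) /= [X in (_ + X)%R]big1 ?addr0.
  by rewrite big_uniq.
by move=> j /h.
Qed.
End Rest.

Section C4.
Variables (K : fieldType) (n : nat) (i0 i1 i2 i3 : 'I_n).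
Hypotheses (h01 : i0 != i1) (h02 : i0 != i2) (h03 : i0 != i3)
  (h12 : i1 != i2) (h13 : i1 != i3) (h23 : i2 != i3).
Let uL : uniq [:: i0; i1; i2; i3].
Proof. by rewrite /= !inE !negb_or h01 h02 h03 h12 h13 h23. Qed.
Let L4 := [:: i0; i1; i2; i3].

Definition c4 (m : 'X_{1..n}) : K :=
  if restL L4 m && (m i2 + m i3 == 1)%N then ((-1) ^+ (m i0 + m i3))%R else 0%R.

Let e01 : (i0 == i1) = false. Proof. exact: negbTE. Qed.
Let e02 : (i0 == i2) = false. Proof. exact: negbTE. Qed.
Let e03 : (i0 == i3) = false. Proof. exact: negbTE. Qed.
Let e12 : (i1 == i2) = false. Proof. exact: negbTE. Qed.
Let e13 : (i1 == i3) = false. Proof. exact: negbTE. Qed.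
Let e23 : (i2 == i3) = false. Proof. exact: negbTE. Qed.
Let e10 : (i1 == i0) = false. Proof. by rewrite eq_sym e01. Qed.
Let e20 : (i2 == i0) = false. Proof. by rewrite eq_sym e02. Qed.
Let e30 : (i3 == i0) = false. Proof. by rewrite eq_sym e03. Qed.
Let e21 : (i2 == i1) = false. Proof. by rewrite eq_sym e12. Qed.
Let e31 : (i3 == i1) = false. Proof. by rewrite eq_sym e13. Qed.
Let e32 : (i3 == i2) = false. Proof. by rewrite eq_sym e23. Qed.

Lemma c4_harm m : (\sum_i c4 (m + U_(i))%MM = 0)%R.
Proof.
rewrite (@sum_in_L n K L4) //; last first.
  by move=> i iL; rewrite /c4 restU (negbTE iL) andbF /=.
rewrite !big_cons big_nil /c4 !restU !inE !eqxx !orbT !andbT.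
case: (restL L4 m); last by rewrite /= !addr0.
rewrite !mnmDE !mnm1E !eqxx !(e01, e02, e03, e10, e12, e13, e20, e21, e23, e30, e31, e32) /=.
rewrite !addn0 addr0; move: (m i0) (m i2) (m i3) => a x y.
case: ifP => h1; case: ifP => h2; case: ifP => h3; rewrite ?exprD ?expr1. all: try (ring; fail). all: exfalso; clear -h1 h2 h3; move: h1 h2 h3; case: eqP; case: eqP; case: eqP => // ? ? ?; lia.
Qed.

Lemma restL_val (L : seq 'I_n) (m : 'X_{1..n}) j : restL L m -> j \notin L -> m j = 0%N.
Proof. by move=> /forallP /(_ j) /implyP h /h /eqP. Qed.

Definition mk4 a b p q : 'X_{1..n} :=
  (U_(i0) *+ a + U_(i1) *+ b + U_(i2) *+ p + U_(i3) *+ q)%MM.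

Lemma mk4_eq m : restL L4 m -> m = mk4 (m i0) (m i1) (m i2) (m i3).
Proof.
move=> hr; apply/mnmP => j; rewrite /mk4 !mnmDE !mulmnE !mnm1E.
have [->|n0] := eqVneq j i0; first by rewrite e10 e20 e30 /= mul1n !mul0n !addn0.
have [->|n1] := eqVneq j i1; first by rewrite e21 e31 /= mul1n !mul0n !addn0.
have [->|n2] := eqVneq j i2; first by rewrite e32 /= mul1n !mul0n !addn0 add0n.
have [->|n3] := eqVneq j i3; first by rewrite /= mul1n !mul0n !add0n.
rewrite (@restL_val L4 m j hr) ?inE; first by rewrite /= !mul0n.
by rewrite !negb_or n0 n1 n2 n3.
Qed.

Lemma c4_pure d i : (2 <= d)%N -> c4 (U_(i) *+ d)%MM = 0%R.
Proof.
move=> hd; rewrite /c4 !mulmnE !mnm1E.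
case: ifP => // /andP [_].
case: (i =P i2) => [->|_]; first by rewrite e23 /=; clia.
case: (i =P i3) => [->|_] /=; clia.
Qed.

Lemma c4_wit d : (1 <= d)%N -> mdeg (mk4 0 d.-1 1 0) = d /\ c4 (mk4 0 d.-1 1 0) != 0%R.
Proof.
move=> hd; split.
  by rewrite /mk4 !mdegD !mdegMn !mdeg1; clia.
have hr : restL L4 (mk4 0 d.-1 1 0).
  apply/forallP => j; apply/implyP; rewrite !inE !negb_or => /and4P [a b c e].
  have b' : (i1 == j) = false by rewrite eq_sym; apply/negbTE.
  have c' : (i2 == j) = false by rewrite eq_sym; apply/negbTE.
  by rewrite /mk4 !mnmDE !mulmnE !mnm1E b' c' !muln0.
rewrite /c4 hr /= /mk4 !mnmDE !mulmnE !mnm1E !eqxx ?e01 ?e02 ?e03 ?e10 ?e12 ?e13 ?e20 ?e21 ?e23 ?e30 ?e31 ?e32 /= ?muln0 ?muln1.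
by rewrite expf_neq0 // oppr_eq0 oner_eq0.
Qed.

Lemma c4_supp d (m : 'X_{1..n}) : mdeg m = d -> c4 m != 0%R ->
  m \in [seq mk4 a (d.-1 - a) 1 0 | a <- iota 0 d] ++ [seq mk4 a (d.-1 - a) 0 1 | a <- iota 0 d].
Proof.
move=> dm; rewrite /c4; case: ifP => [/andP [hr h23']|]; last by rewrite eqxx.
move=> _; rewrite (mk4_eq hr) mem_cat.
have dd := restL_mdeg uL hr; rewrite dm !big_cons big_nil addn0 in dd.
have ha : (m i0 < d)%N by clia.
have hb : m i1 = (d.-1 - m i0)%N by clia.
rewrite hb.
have [[-> ->]|[-> ->]] : (m i2 = 1 /\ m i3 = 0 \/ m i2 = 0 /\ m i3 = 1)%N by clia.
  by apply/orP; left; apply/mapP; exists (m i0) => //; rewrite mem_iota; clia.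
by apply/orP; right; apply/mapP; exists (m i0) => //; rewrite mem_iota; clia.
Qed.

End C4.

Section C3.
Variables (K : fieldType) (n : nat) (i0 i1 i2 : 'I_n).
Hypotheses (h01 : i0 != i1) (h02 : i0 != i2) (h12 : i1 != i2).
Let uL : uniq [:: i0; i1; i2].
Proof. by rewrite /= !inE !negb_or h01 h02 h12. Qed.
Let L3 := [:: i0; i1; i2].

Definition c3 (m : 'X_{1..n}) : K :=
  if restL L3 m then
    match m i2 with
    | 0 => ((-1) ^+ (m i0) * (m i0 * m i1)%:R)%R
    | 1 => ((-1) ^+ (m i0) * ((m i1)%:R - (m i0)%:R))%R
    | 2 => (- ((-1) ^+ (m i0) *+ 2))%R
    | _ => 0%R
    end
  else 0%R.

Let e01 : (i0 == i1) = false. Proof. exact: negbTE. Qed.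
Let e02 : (i0 == i2) = false. Proof. exact: negbTE. Qed.
Let e12 : (i1 == i2) = false. Proof. exact: negbTE. Qed.
Let e10 : (i1 == i0) = false. Proof. by rewrite eq_sym e01. Qed.
Let e20 : (i2 == i0) = false. Proof. by rewrite eq_sym e02. Qed.
Let e21 : (i2 == i1) = false. Proof. by rewrite eq_sym e12. Qed.

Lemma c3_harm m : (\sum_i c3 (m + U_(i))%MM = 0)%R.
Proof.
rewrite (@sum_in_L n K L3) //; last first.
  by move=> i iL; rewrite /c3 restU (negbTE iL) andbF /=.
rewrite !big_cons big_nil /c3 !restU !inE !eqxx !orbT !andbT.
case: (restL L3 m); last by rewrite /= !addr0.
rewrite !mnmDE !mnm1E !eqxx ?e01 ?e02 ?e10 ?e12 ?e20 ?e21 !addn0 !addn1 addr0.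
move: (m i0) (m i1) (m i2) => a b e.
case: e => [|[|[|e]]]; cbv iota beta; rewrite ?natrM ?mulrSr ?exprS; ring.
Qed.

Definition mk3 a b e : 'X_{1..n} := (U_(i0) *+ a + U_(i1) *+ b + U_(i2) *+ e)%MM.

Lemma mk3_eq m : restL L3 m -> m = mk3 (m i0) (m i1) (m i2).
Proof.
move=> hr; apply/mnmP => j; rewrite /mk3 !mnmDE !mulmnE !mnm1E.
have [->|n0] := eqVneq j i0; first by rewrite e10 e20 /= mul1n !mul0n !addn0.
have [->|n1] := eqVneq j i1; first by rewrite e21 /= mul1n !mul0n !addn0.
have [->|n2] := eqVneq j i2; first by rewrite /= mul1n !mul0n !add0n.
rewrite (@restL_val n L3 m j hr) ?inE; first by rewrite /= !mul0n.
by rewrite !negb_or n0 n1 n2.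
Qed.

Lemma c3_pure f i : c3 (U_(i) *+ f.+3)%MM = 0%R.
Proof.
rewrite /c3; case: ifP => // hr; rewrite !mulmnE !mnm1E.
have [->|n0] := eqVneq i i0; first by rewrite ?e02 ?e01 /= ?mul0n ?muln0 ?mul1n /= ?mulr0.
have [->|n1] := eqVneq i i1; first by rewrite ?e12 /= ?mul0n ?muln0 ?mul1n /= ?mulr0.
by case: (i == i2); rewrite /= ?mul0n ?muln0 ?mul1n /= ?mulr0.
Qed.

Lemma c3_wit f : [pchar K]%R =i pred0 ->
  mdeg (mk3 0 f.+1 2) = f.+3 /\ c3 (mk3 0 f.+1 2) != 0%R.
Proof.
move=> hK; split.
  by rewrite /mk3 !mdegD !mdegMn !mdeg1; clia.
have hr : restL L3 (mk3 0 f.+1 2).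
  apply/forallP => j; apply/implyP; rewrite !inE !negb_or => /and3P [a b c].
  have b' : (i1 == j) = false by rewrite eq_sym; apply/negbTE.
  have c' : (i2 == j) = false by rewrite eq_sym; apply/negbTE.
  by rewrite /mk3 !mnmDE !mulmnE !mnm1E b' c' !muln0.
rewrite /c3 hr /mk3 !mnmDE !mulmnE !mnm1E !eqxx ?e01 ?e02 ?e10 ?e12 ?e20 ?e21 /= ?muln0 ?muln1.
rewrite oppr_eq0 -mulr_natr mulf_neq0 //; first by rewrite expf_neq0 // oppr_eq0 oner_eq0.
by move/(GRing.pcharf0P K): hK => ->.
Qed.

Definition cl3 d := [seq mk3 a (d - a) 0 | a <- iota 1 d.-1]
  ++ [seq mk3 a (d.-1 - a) 1 | a <- [seq a <- iota 0 d | a.*2 != d.-1]]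
  ++ [seq mk3 a (d - 2 - a) 2 | a <- iota 0 d.-1].

Lemma c3_supp d (m : 'X_{1..n}) : mdeg m = d -> c3 m != 0%R -> m \in cl3 d.
Proof.
move=> dm; rewrite /c3; case: ifP => [hr|]; last by rewrite eqxx.
have dd := restL_mdeg uL hr; rewrite dm !big_cons big_nil addn0 in dd.
move=> hc; rewrite (mk3_eq hr) /cl3 !mem_cat.
move: dd hc; case: (m i2) => [|[|[|e]]] dd hc.
- have hab : (m i0 * m i1 != 0)%N.
    by apply: contraNneq hc => ->; rewrite mulr0.
  have -> : m i1 = (d - m i0)%N by clia.
  apply/orP; left; apply/mapP; exists (m i0) => //.
  by rewrite mem_iota; move: hab; rewrite muln_eq0 negb_or => /andP [/eqP ? /eqP ?]; clia.
- have hab : m i1 != m i0.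
    by apply: contraNneq hc => ->; rewrite subrr mulr0.
  have hb : m i1 = (d.-1 - m i0)%N by clia.
  apply/orP; right; apply/orP; left; apply/mapP; exists (m i0); last by rewrite hb.
  rewrite mem_filter mem_iota; apply/andP; split; last by clia.
  by move: hab => /eqP ?; apply/eqP; clia.
- have -> : m i1 = (d - 2 - m i0)%N by clia.
  apply/orP; right; apply/orP; right; apply/mapP; exists (m i0) => //.
  by rewrite mem_iota; clia.
- by rewrite eqxx in hc.
Qed.

End C3.

Lemma size_cl3 (n : nat) (i0 i1 i2 : 'I_n) d : (1 <= d)%N ->
  (size (cl3 i0 i1 i2 d) <= (if odd d then 3 * (d - 1) else 3 * (d - 1) + 1))%N.
Proof.
move=> hd; rewrite /cl3 !size_cat !size_map !size_iota size_filter.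
suff : (count (fun a => a.*2 != d.-1) (iota 0 d) <= d - odd d)%N.
  by case: (odd d) => /=; clia.
case hod: (odd d); last by rewrite subn0 -{3}(size_iota 0 d) count_size.
have := count_predC (fun a => a.*2 != d.-1) (iota 0 d); rewrite size_iota.
suff : (0 < count (predC (fun a => a.*2 != d.-1)) (iota 0 d))%N by clia.
rewrite -has_count; apply/hasP; exists d./2.
  rewrite mem_iota add0n; have := odd_double_half d; rewrite hod.
  by rewrite -addnn; clia.
rewrite /= negbK; apply/eqP; have := odd_double_half d; rewrite hod; clia.
Qed.


Lemma binC2 m : ('C(m.+1, 2) * 2 = m.+1 * m)%N.
Proof.
elim: m => [//|m IH]; rewrite binS bin1 mulnDl IH; lia.
Qed.

Lemma Abound n' e : (n'.+3 <= 'C(e.+1 + n'.+2, e.+2))%N.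
Proof.
elim: e => [|e IH].
  rewrite add1n; have := binC2 n'.+2; nia.
by rewrite addSn binS; lia.
Qed.

Lemma Xbound4 n'' e : (2 * e.+2 <= 'C(e.+1 + n''.+3, e.+1))%N.
Proof.
elim: e => [|e IH]; first by rewrite add1n bin1; lia.
rewrite addSn binS; have := Abound n''.+1 e; lia.
Qed.

Lemma X3 e : 'C(e.+1 + 2, e.+1) = 'C(e.+3, 2).
Proof.
have -> : (e.+1 + 2 = e.+3)%N by lia.
transitivity 'C(e.+3, e.+3 - 2); first by congr binomial; lia.
by rewrite bin_sub.
Qed.

Lemma Xbound3 f : ((if odd f.+3 then 3 * (f.+3 - 1) else 3 * (f.+3 - 1) + 1) <= 'C(f.+2 + 2, f.+2))%N.
Proof.
rewrite X3; have := binC2 f.+3.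
case: f => [|f]; first by rewrite /=; lia.
case: (odd _); nia.
Qed.

Lemma inord_neq k a b : (a <= k)%N -> (b <= k)%N -> a != b ->
  (inord a : 'I_k.+1) != inord b.
Proof.
move=> ha hb hab; apply/eqP => /(congr1 (@nat_of_ord _)); rewrite !inordK //.
by apply/eqP.
Qed.

Lemma exists_c (K : fieldType) n' e : [pchar K]%R =i pred0 -> ~ (n'.+3 = 3 /\ e.+2 = 2) ->
  exists c : 'X_{1..n'.+3} -> K,
  [/\ (forall m, \sum_(i < n'.+3) c (m + U_(i))%MM = 0)%R,
      (forall i : 'I_n'.+3, c (U_(i) *+ e.+2)%MM = 0%R),
      (exists m0, mdeg m0 = e.+2 /\ c m0 != 0%R)
    & (#|[set x : 'X_{1..n'.+3 < e.+3} | (mdeg (val x) == e.+2) && (c (val x) != 0%R)]|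
        <= (if n'.+3 == 3 then (if odd e.+2 then 3 * (e.+2 - 1) else 3 * (e.+2 - 1) + 1)
           else 2 * e.+2))%N].
Proof.
move=> hK hne.
case: n' hne => [|n''] hne.
  case: e hne => [|f] hne; first by exfalso; apply: hne.
  pose i0 : 'I_3 := inord 0; pose i1 : 'I_3 := inord 1; pose i2 : 'I_3 := inord 2.
  have h01 : i0 != i1 by apply: inord_neq.
  have h02 : i0 != i2 by apply: inord_neq.
  have h12 : i1 != i2 by apply: inord_neq.
  exists (c3 K i0 i1 i2); split.
  - exact: c3_harm.
  - by move=> i; apply: c3_pure.
  - by exists (mk3 i0 i1 i2 0 f.+1 2); apply: c3_wit.
  - apply: leq_trans (size_cl3 i0 i1 i2 (isT : (1 <= f.+3)%N)).
    apply: card_le_seq => x; rewrite inE => /andP [/eqP dx cx].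
    exact: c3_supp dx cx.
pose i0 : 'I_n''.+4 := inord 0; pose i1 : 'I_n''.+4 := inord 1.
pose i2 : 'I_n''.+4 := inord 2; pose i3 : 'I_n''.+4 := inord 3.
have h01 : i0 != i1 by apply: inord_neq.
have h02 : i0 != i2 by apply: inord_neq.
have h03 : i0 != i3 by apply: inord_neq.
have h12 : i1 != i2 by apply: inord_neq.
have h13 : i1 != i3 by apply: inord_neq.
have h23 : i2 != i3 by apply: inord_neq.
exists (c4 K i0 i1 i2 i3); split.
- exact: c4_harm.
- by move=> i; apply: c4_pure.
- by exists (mk4 i0 i1 i2 i3 0 e.+1 1 0); apply: (c4_wit K h01 h02 h03 h12 h13 h23 (d := e.+2)).
- apply: (@leq_trans (size ([seq mk4 i0 i1 i2 i3 a (e.+2.-1 - a) 1 0 | a <- iota 0 e.+2]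
      ++ [seq mk4 i0 i1 i2 i3 a (e.+2.-1 - a) 0 1 | a <- iota 0 e.+2]))).
    apply: card_le_seq => x; rewrite inE => /andP [/eqP dx cx].
    exact: c4_supp dx cx.
  by rewrite size_cat !size_map size_iota /=; lia.
Qed.

Theorem corollary4p2 (K : fieldType) (n d : nat) :
  [pchar K]%R =i pred0 -> (3 <= n)%N -> (2 <= d)%N ->
  (forall mu : nat,
     (HF_S K n d - HF_S K n d.-1 <= mu <= beta n d)%N ->
     exists G : seq 'X_{1..n},
       [/\ min_gens_deg G mu d, artinian K G & fails_WLP_surj_in K G d.-1])
  /\ ((HF_S K n d - HF_S K n d.-1 <= beta n d)%N <-> ~ (n = 3 /\ d = 2)).
Proof.
move=> hK hn hd.
case: n hn => [|[|[|n']]] // _.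
case: d hd => [|[|e]] // _.
have HF k : HF_S K n'.+3 k = 'C(k + n'.+2, k) by rewrite HF_S_size size_sig.
set A := 'C(e.+1 + n'.+2, e.+2).
set X := 'C(e.+1 + n'.+2, e.+1).
have HF2 : HF_S K n'.+3 e.+2 = (A + X)%N by rewrite HF addSn binS.
have HF1 : HF_S K n'.+3 (e.+2).-1 = X by rewrite HF.
have hA : (n'.+3 <= A)%N := Abound n' e.
set cv := (if n'.+3 == 3 then (if odd e.+2 then 3 * (e.+2 - 1) else 3 * (e.+2 - 1) + 1)
           else 2 * e.+2)%N.
have hbeta : beta n'.+3 e.+2 = (A + X - cv)%N.
  rewrite /beta -HF2 HF; congr subn; congr binomial; lia.
have key : (cv <= X)%N <-> ~ (n'.+3 = 3 /\ e.+2 = 2).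
  rewrite /cv /X; case: n' {HF HF2 HF1 hA hbeta A X cv} => [|n''].
    case: e => [|f]; first by split => // h; exfalso; apply: h.
    by split => [_ [_ h]|_]; [lia | apply: Xbound3].
  by split => _; [case => h _; lia | apply: (Xbound4 n'' e)].
split; last first.
  rewrite HF2 HF1 hbeta addnK; split.
    by move=> h; apply/key; lia.
  by move/key => h; lia.
move=> mu; rewrite HF2 HF1 hbeta addnK => /andP [h1 h2].
have hcv : (cv <= X)%N by lia.
pose nu := (A + X - mu)%N.
suff [c [hc1 hc2 hc3 hc4]] : exists c : 'X_{1..n'.+3} -> K,
  [/\ (forall m, \sum_(i < n'.+3) c (m + U_(i))%MM = 0)%R,
      (forall i : 'I_n'.+3, c (U_(i) *+ e.+2)%MM = 0%R),
      (exists m0, mdeg m0 = e.+2 /\ c m0 != 0%R)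
    & (#|[set x : 'X_{1..n'.+3 < e.+3} | (mdeg (val x) == e.+2) && (c (val x) != 0%R)]|
        <= cv)%N].
  have h4 : (#|[set x : 'X_{1..n'.+3 < e.+3} | (mdeg (val x) == e.+2) && (c (val x) != 0%R)]|
        <= nu)%N by rewrite /nu; lia.
  have h5 : (nu <= HF_S K n'.+3 e.+1)%N by rewrite /nu -HF1 /=; lia.
  have h6 : (nu + n'.+3 <= HF_S K n'.+3 e.+2)%N by rewrite HF2 /nu; lia.
  have [G [hG1 hG2 hG3]] := construct (isT : (0 < n'.+3)%N) hc1 hc2 hc3 h4 h5 h6.
  exists G; split => //.
  by rewrite HF2 /nu (_ : (A + X - (A + X - mu))%N = mu) in hG1 => //; lia.
by apply: exists_c => //; apply/key.
Qed.
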